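(* Let $A\in\{0,1\}^{n\times n}$, let $\mathcal{F}$ be the set of all compatible pairs $(n_1,n_2)$ for which $A$ admits an $(n_1,n_2)$ factorization, and let $\mathcal{L}=\{n_1:(n_1,n_2)\in\mathcal{F}\}$. Let $\mathfrak{l}_0<\mathfrak{l}_1<\dots<\mathfrak{l}_q$ be a branch of $\mathcal{L}$, and set $p_k=\mathfrak{l}_k/\mathfrak{l}_{k-1}$ for $k=1,\dots,q$ and $r=n/\mathfrak{l}_q$. Then $A$ admits an $(\mathfrak{l}_0,p_1,\dots,p_q,r)$ factorization, and this factorization is prime, i.e. every factor matrix in it is prime.
   Context: Kronecker products of binary matrices use Boolean arithmetic ($1+1=1$). An $(n_1,\dots,n_m)$ factorization of $A$ is $A=A_1\otimes\cdots\otimes A_m$ with $A_i\in\{0,1\}^{n_i\times n_i}$, $\prod n_i=n$. A compatible pair for $n$ is $(n_1,n_2)$ with $n_1,n_2$ positive divisors of $n$ different from $1$ and $n$ and $n_1n_2=n$. A matrix $X\in\{0,1\}^{m\times m}$ is decomposable if $X=X_1\otimes\cdots\otimes X_\ell$ for some $\ell>1$ and $X_i\in\{0,1\}^{m_i\times m_i}$ with $m_i>1$; it is prime if it is not decomposable. For a finite set $\mathcal{X}\subset\mathbb{N}$, $\overline{\mathcal{X}}$ denotes the set of elements of $\mathcal{X}$ that are not multiples of another element of $\mathcal{X}$. A branch of $\mathcal{L}$ is a sequence $\mathfrak{l}_0,\mathfrak{l}_1,\dots,\mathfrak{l}_q$ ($q\ge0$) constructed as follows: $\mathfrak{l}_0\in\overline{\mathcal{L}}$;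 for $k\ge1$, letting $\mathcal{M}_k$ be the set of elements of $\mathcal{L}$ that are multiples of $\mathfrak{l}_{k-1}$ other than $\mathfrak{l}_{k-1}$ itself, $\mathfrak{l}_k\in\overline{\mathcal{M}_k}$; the sequence stops at $\mathfrak{l}_q$ when $\mathcal{L}$ contains no multiple of $\mathfrak{l}_q$ other than $\mathfrak{l}_q$. *)

(* Defs.v *)
From Stdlib Require List.
From mathcomp Require Import all_boot.
Set Implicit Arguments. Unset Strict Implicit. Unset Printing Implicit Defensive.

(* A binary matrix is represented by its entry function (0-based indices);
   its size m is carried separately: only entries (i,j) with i,j < m matter. *)
Definition bmat := nat -> nat -> bool.

Definition eqm (m : nat) (X Y : bmat) : Prop :=
  forall i j, i < m -> j < m -> X i j = Y i j.

(* Sized matrix: (size, entries). Boolean Kronecker product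
   (X (x) Y)[i1*b+i2, j1*b+j2] = X[i1,j1] && Y[i2,j2]   (1+1=1, 1*1=1). *)
Definition kron (X Y : nat * bmat) : nat * bmat :=
  (X.1 * Y.1,
   fun i j => X.2 (i %/ Y.1) (j %/ Y.1) && Y.2 (i %% Y.1) (j %% Y.1)).

Definition kronl (fs : seq (nat * bmat)) : nat * bmat :=
  foldr kron (1, fun _ _ => true) fs.

Definition factorization (A : bmat) (n : nat) (ns : seq nat)
    (fs : seq (nat * bmat)) : Prop :=
  map fst fs = ns /\ \prod_(k <- ns) k = n /\ eqm n A (kronl fs).2.

Definition admits (A : bmat) (n : nat) (ns : seq nat) : Prop :=
  exists fs, factorization A n ns fs.

Definition decomposable (m : nat) (X : bmat) : Prop :=
  exists fs : seq (nat * bmat),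
    1 < size fs /\ (forall f, List.In f fs -> 1 < f.1) /\
    factorization X m (map fst fs) fs.

Definition prime_mat (m : nat) (X : bmat) : Prop := ~ decomposable m X.

Definition compatible (n n1 n2 : nat) : Prop :=
  [/\ 0 < n1, 0 < n2, n1 %| n, n2 %| n &
      [/\ n1 != 1, n1 != n, n2 != 1, n2 != n & n1 * n2 = n]].

Definition Lset (A : bmat) (n : nat) : nat -> Prop :=
  fun n1 => exists n2, compatible n n1 n2 /\ admits A n [:: n1; n2].

Definition in_bar (X : nat -> Prop) (x : nat) : Prop :=
  X x /\ forall y, X y -> y <> x -> ~ (y %| x).

Fixpoint branch_from (L : nat -> Prop) (prev : nat) (s : seq nat) : Prop :=
  match s with
  | [::] => forall y, L y -> prev %| y -> y = prev
  | x :: s' =>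
      in_bar (fun y => L y /\ prev %| y /\ y <> prev) x /\ branch_from L x s'
  end.

Definition is_branch (L : nat -> Prop) (s : seq nat) : Prop :=
  match s with
  | [::] => False
  | x :: s' => in_bar L x /\ branch_from L x s'
  end.

(* The sizes (l_0, p_1, ..., p_q, r), p_k = l_k / l_(k-1), r = n / l_q. *)
Definition branch_sizes (n : nat) (s : seq nat) : seq nat :=
  head 0 s :: rcons [seq x.2 %/ x.1 | x <- zip s (behead s)] (n %/ last 0 s).

(* Main.v *)
Require Import Defs.
From Stdlib Require List.
From mathcomp Require Import all_boot zify.
Set Implicit Arguments. Unset Strict Implicit.

Definition one : nat * bmat := (1, fun _ _ => true).

Lemma eqm_trans m X Y Z : eqm m X Y -> eqm m Y Z -> eqm m X Z.
Proof. by move=> H1 H2 i j hi hj; rewrite H1 // H2. Qed.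

Arguments eqm_trans {m X Y Z}.

Lemma eqm_sym m X Y : eqm m X Y -> eqm m Y X.
Proof. by move=> H i j hi hj; rewrite H. Qed.

Lemma kron_cong X X' Y Y' : X.1 = X'.1 -> Y.1 = Y'.1 ->
  eqm X.1 X.2 X'.2 -> eqm Y.1 Y.2 Y'.2 ->
  eqm (X.1 * Y.1) (kron X Y).2 (kron X' Y').2.
Proof.
move=> e1 e2 HX HY i j hi hj; rewrite /kron /= -e2.
have Yp : 0 < Y.1 by case: (Y.1) hi => //; rewrite muln0.
rewrite HX ?ltn_divLR // HY ?ltn_pmod //.
Qed.

Lemma kron_assoc X Y Z :
  eqm (X.1 * Y.1 * Z.1) (kron (kron X Y) Z).2 (kron X (kron Y Z)).2.
Proof.
move=> i j hi hj; rewrite /kron /=.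
have Zp : 0 < Z.1 by case: (Z.1) hi => //; rewrite muln0.
have Yp : 0 < Y.1 by case: (Y.1) hi => //; rewrite muln0 mul0n.
rewrite -!andbA; congr andb.
  by rewrite (mulnC Y.1) !divnMA.
rewrite !modn_divl (mulnC Y.1); congr andb.
by rewrite !modn_dvdm // dvdn_mulr.
Qed.

Lemma kron_one X : eqm X.1 (kron X one).2 X.2.
Proof. by move=> i j _ _; rewrite /kron /= !divn1 andbT. Qed.

Lemma one_kron X : eqm X.1 (kron one X).2 X.2.
Proof. by move=> i j hi hj; rewrite /kron /= !modn_small // !divn_small. Qed.

Lemma kronl_size fs : (kronl fs).1 = \prod_(k <- map fst fs) k.
Proof. by elim: fs => [|f fs IH]; rewrite /= ?big_nil ?big_cons // IH. Qed.

Lemma kronl_cat pre post :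
  eqm ((kronl pre).1 * (kronl post).1) (kronl (pre ++ post)).2
      (kron (kronl pre) (kronl post)).2.
Proof.
elim: pre => [|p pre IH] /=.
  rewrite mul1n => i j hi hj; symmetry; exact: (one_kron (X:=kronl post)).
have e : (kronl (pre ++ post)).1 = (kronl pre).1 * (kronl post).1.
  by rewrite !kronl_size map_cat big_cat.
apply: eqm_trans (_ : eqm _ _ (kron p (kron (kronl pre) (kronl post))).2) _.
  rewrite -mulnA -e. apply: kron_cong => //. by rewrite e.
move=> i j hi hj; symmetry; apply: (kron_assoc (X:=p) (Y:=kronl pre) (Z:=kronl post)); rewrite /= ?mulnA //.
Qed.

Lemma step n A prev d m' F R B' C' :
  n = prev * (d * m') ->
  eqm n A (kron (prev, F) (d * m', R)).2 ->
  eqm n A (kron (prev * d, B') (m', C')).2 ->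
  exists Y R', eqm n A (kron (prev, F) (kron (d, Y) (m', R'))).2.
Proof.
move=> en HA HB.
case: (boolP [exists I : 'I_prev, exists J : 'I_prev, F I J]).
  case/existsP=> I /existsP [J FIJ].
  exists (fun a b => B' (I * d + a) (J * d + b)), C'.
  move=> i j hi hj.
  have Pp : 0 < d * m' by move: hi; rewrite en; case: (d * m') => //; rewrite muln0.
  have dp : 0 < d by rewrite lt0n; apply/eqP => d0; move: Pp; rewrite d0.
  have mp : 0 < m' by rewrite lt0n; apply/eqP => d0; move: Pp; rewrite d0 muln0.
  rewrite HA //= ; congr andb.
  set u := i %% (d * m'); set v := j %% (d * m').
  have hu : u < d * m' by rewrite ltn_pmod.
  have hv : v < d * m' by rewrite ltn_pmod.
  have hI : I * (d * m') + u < n.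
    rewrite en; apply: (leq_trans (n := I * (d*m') + d * m')); first by rewrite ltn_add2l.
    by rewrite -mulSnr leq_mul2r ltn_ord orbT.
  have hJ : J * (d * m') + v < n.
    rewrite en; apply: (leq_trans (n := J * (d*m') + d * m')); first by rewrite ltn_add2l.
    by rewrite -mulSnr leq_mul2r ltn_ord orbT.
  have e1 : forall K w, w < d * m' -> (K * (d * m') + w) %/ (d * m') = K.
    by move=> K w hw; rewrite divnMDl // divn_small // addn0.
  have e2 : forall K w, w < d * m' -> (K * (d * m') + w) %% (d * m') = w.
    by move=> K w hw; rewrite modnMDl modn_small.
  have e3 : forall K w, (K * (d * m') + w) %/ m' = K * d + w %/ m'.
    by move=> K w; rewrite mulnA divnMDl.
  have e4 : forall K w, (K * (d * m') + w) %% m' = w %% m'.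
    by move=> K w; rewrite mulnA modnMDl.
  have := HA _ _ hI hJ; rewrite HB //= e1 // e1 // e2 // e2 // e3 e3 e4 e4 FIJ /=.
  by move=> <-.
rewrite negb_exists => /forallP H0.
exists F, R => i j hi hj; rewrite HA //=.
have Pp : 0 < d * m' by move: hi; rewrite en; case: (d * m') => //; rewrite muln0.
have hi' : i %/ (d * m') < prev by rewrite ltn_divLR // -en.
have hj' : j %/ (d * m') < prev by rewrite ltn_divLR // -en.
have := H0 (Ordinal hi'); rewrite negb_exists => /forallP /(_ (Ordinal hj')) /= /negbTE ->.
by [].
Qed.

Lemma two_fact A n x n2 : admits A n [:: x; n2] ->
  exists B C, eqm n A (kron (x, B) (n2, C)).2.
Proof.
case=> fs [hm [hp H]].
case: fs hm H => [|[a B] [|[b C] [|]]] //= [ea eb] H; subst a b.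
rewrite !big_cons big_nil muln1 in hp.
exists B, C => i j hi hj; rewrite H //.
by rewrite /kron /= !muln1 !divn1 andbT.
Qed.

Lemma tail n A s' : forall prev F R,
  branch_from (Lset A n) prev s' -> 0 < prev -> prev %| n ->
  eqm n A (kron (prev, F) (n %/ prev, R)).2 ->
  exists gs, map fst gs = rcons [seq x.2 %/ x.1 | x <- zip (prev :: s') s'] (n %/ last prev s')
     /\ (kronl gs).1 = n %/ prev /\ eqm n A (kron (prev, F) (kronl gs)).2.
Proof.
elim: s' => [|x s'' IH] prev F R.
  move=> _ pp pn HA; exists [:: (n %/ prev, R)]; split => //; split; first by rewrite /= muln1.
  apply: (eqm_trans HA) => i j hi hj.
  by rewrite /kron /= !muln1 !divn1 andbT.
move=> [[[Lx [px xnp]] _] hbf] pp pn HA.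
case: Lx => n2 [[x0 n20 xn n2n [_ _ _ _ exn]] adm].
case: (two_fact adm) => B' [C' HB].
set d := x %/ prev.
have ex : x = prev * d by rewrite /d mulnC divnK.
have en : n = prev * (d * n2) by rewrite mulnA -ex exn.
have enp : n %/ prev = d * n2 by rewrite en mulKn.
have en2 : n2 = n %/ x by rewrite -exn mulKn.
rewrite enp in HA. rewrite ex in HB.
case: (step en HA HB) => Y [R' H1].
have H2 : eqm n A (kron (x, (kron (prev, F) (d, Y)).2) (n %/ x, R')).2.
  rewrite -en2; apply: (eqm_trans H1) => i j hi hj; symmetry.
  apply: (kron_assoc (X:=(prev, F)) (Y:=(d, Y)) (Z:=(n2, R'))); by rewrite /= -mulnA -en.
have x0' : 0 < x by [].
case: (IH x _ R' hbf x0' xn H2) => gs' [e1 [e2 e3]].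
exists ((d, Y) :: gs'); split; first by rewrite /= e1.
split; first by rewrite /= e2 enp en2.
apply: (eqm_trans e3) => i j hi hj.
apply: (kron_assoc (X:=(prev, F)) (Y:=(d, Y)) (Z:=kronl gs')); by rewrite /= e2 -ex mulnC divnK.
Qed.

Lemma eqm_refl m X : eqm m X X.
Proof. by []. Qed.

Lemma eqm_size m m' X Y : m = m' -> eqm m X Y -> eqm m' X Y.
Proof. by move=> ->. Qed.

Lemma kronl_pos gs : (forall g, List.In g gs -> 0 < g.1) -> 0 < (kronl gs).1.
Proof.
elim: gs => [|g gs IH] //= H; rewrite muln_gt0 H /=; last by left.
by apply: IH => h hh; apply: H; right.
Qed.

Lemma decomp_L n A pre f post : 0 < n ->
  factorization A n (map fst (pre ++ f :: post)) (pre ++ f :: post) ->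
  decomposable f.1 f.2 ->
  exists c, [/\ 1 < c, c %| f.1, c != f.1 & Lset A n ((kronl pre).1 * c)].
Proof.
move=> n0 [_ [hp HA]] [gs [hs [hgt [_ [hpg Hg]]]]].
case: gs hs hgt hpg Hg => [|g [|g2 gs'']] //= _ hgt hpg Hg.
set P := (kronl pre).1. set K2 := kronl (g2 :: gs''). set Q := (kronl post).1.
set e := K2.1.
have g1 : 1 < g.1 by apply: hgt; left.
have e1 : 1 < e.
  rewrite /e /K2 /=.
  have : 0 < (kronl gs'').1 by apply: kronl_pos => h hh; apply: ltnW; apply: hgt; right; right.
  have : 1 < g2.1 by apply: hgt; right; left.
  case: (kronl gs'').1 => // k; case: g2.1 => // [[|m]] // _ _. by rewrite mulSn; case: k.
have ef : f.1 = g.1 * e.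
  by rewrite -hpg -(kronl_size (g :: g2 :: gs'')).
have en : n = P * (f.1 * Q).
  by rewrite -hp map_cat big_cat /= big_cons /P /Q !kronl_size.
have P0 : 0 < P by move: n0; rewrite en muln_gt0 => /andP [].
have Q0 : 0 < Q by move: n0; rewrite en !muln_gt0 => /and3P [].
have nab : n = P * g.1 * (e * Q) by rewrite en ef !mulnA.
exists g.1; split => //.
- by rewrite ef dvdn_mulr.
- apply/eqP => h; move: ef; rewrite -h => h2. have : g.1 * 1 = g.1 * e by rewrite muln1.
  move/eqP; rewrite eqn_pmul2l; [ by move/eqP => h3; move: e1; rewrite -h3 | by apply: ltnW ].
exists (e * Q); split.
  split.
  - by rewrite muln_gt0 P0; apply: ltnW.
  - by rewrite muln_gt0 Q0 andbT; apply: ltnW.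
  - by rewrite nab dvdn_mulr.
  - by rewrite nab dvdn_mull.
  - have comp : forall x y, 1<x -> 1<y ->
      [/\ x != 1, x != x*y, y != 1, y != x*y & x*y = x*y].
      move=> x y hx hy; split => //; apply/eqP; nia.
    have h1 : 1 < P * g.1 by nia.
    have h2 : 1 < e * Q by nia.
    rewrite nab; exact: comp.
exists [:: (P * g.1, (kron (kronl pre) g).2); (e * Q, (kron K2 (kronl post)).2)].
split => //; split; first by rewrite /= !big_cons big_nil muln1 nab.
set Kpre := kronl pre. set Kpost := kronl post.
have s2 : eqm n A (kron Kpre (kron f Kpost)).2.
  apply: (eqm_trans HA); apply: (eqm_size _ (kronl_cat (pre:=pre) (post:=f :: post))).
  by rewrite en.
have sY : eqm (f.1 * Q) (kron f Kpost).2 (kron g (kron K2 Kpost)).2.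
  apply: (eqm_trans (Y := (kron (f.1, (kron g K2).2) Kpost).2)).
    by apply: kron_cong => //; exact: Hg.
  apply: (eqm_size _ (kron_assoc (X:=g) (Y:=K2) (Z:=Kpost))).
  by rewrite ef.
have s3 : eqm n A (kron Kpre (kron g (kron K2 Kpost))).2.
  apply: (eqm_trans s2); apply: (eqm_size _ (kron_cong (X:=Kpre) (X':=Kpre) (Y:=kron f Kpost) (Y':=kron g (kron K2 Kpost)) _ _ _ sY)) => //.
  by rewrite /= ef mulnA.
have s4 : eqm n A (kron (kron Kpre g) (kron K2 Kpost)).2.
  apply: (eqm_trans s3); apply: eqm_sym; apply: (eqm_size _ (kron_assoc (X:=Kpre) (Y:=g) (Z:=kron K2 Kpost))).
  by rewrite nab.
apply: (eqm_trans s4) => i j hi hj.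
by rewrite /kron /= !muln1 !divn1 andbT.
Qed.

Lemma BF n A s' : forall prev pre x post c,
  branch_from (Lset A n) prev s' -> 0 < prev ->
  rcons [seq y.2 %/ y.1 | y <- zip (prev :: s') s'] (n %/ last prev s') = pre ++ x :: post ->
  1 < c -> c %| x -> c != x -> Lset A n (prev * \prod_(k <- pre) k * c) -> False.
Proof.
elim: s' => [|y s'' IH] prev pre x post c.
  move=> hbf p0 /= hl c1 cx cnx hL.
  case: pre hl hL => [|p pre'] /=; last by case: pre'.
  case=> hx _; rewrite big_nil muln1 => hL.
  have := hbf _ hL (dvdn_mulr _ (dvdnn _)) => /eqP.
  rewrite -{2}(muln1 prev) eqn_pmul2l // => /eqP hc; by move: c1; rewrite hc.
move=> [[[Ly [py ynp]] hbar] hbf] p0 /= hl c1 cx cnx hL.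
have y0 : 0 < y by case: Ly => n2 [[]].
have ey : y = prev * (y %/ prev) by rewrite mulnC divnK.
case: pre hl hL => [|p pre'] /=.
  case=> hx _; rewrite big_nil muln1 => hL.
  apply: (hbar (prev * c)).
  - split => //; split; first by apply: dvdn_mulr.
    move/eqP; rewrite -{2}(muln1 prev) eqn_pmul2l // => /eqP hc; by move: c1; rewrite hc.
  - move=> h; move: cnx; rewrite -hx; move: h; rewrite {1}ey => /eqP.
    by rewrite eqn_pmul2l // => ->.
  - by rewrite {1}ey hx dvdn_pmul2l.
case=> hp hl; rewrite big_cons => hL.
apply: (IH y pre' x post c hbf y0 hl c1 cx cnx).
by move: hL; rewrite {1}ey hp !mulnA.
Qed.

Theorem corollary3 (n : nat) (A : bmat) (s : seq nat) :
  is_branch (Lset A n) s ->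
  admits A n (branch_sizes n s) /\
  (forall fs, factorization A n (branch_sizes n s) fs ->
     forall f, List.In f fs -> prime_mat f.1 f.2).
Proof.
case: s => [|l0 s'] // [[Ll0 hbar0] hbf].
case: (Ll0) => n2 [[x0 n20 xn n2n [_ _ _ _ exn]] adm].
have n0 : 0 < n by rewrite -exn muln_gt0 x0.
split.
  case: (two_fact adm) => B [C HB].
  have en2 : n2 = n %/ l0 by rewrite -exn mulKn.
  rewrite en2 in HB.
  case: (tail hbf x0 xn HB) => gs [e1 [e2 e3]].
  have eb : branch_sizes n (l0 :: s') = map fst ((l0, B) :: gs) by rewrite /= e1.
  exists ((l0, B) :: gs); split; first by rewrite eb.
  split; last exact: e3.
  by rewrite eb -kronl_size /= e2 mulnC divnK.
move=> fs hf f hin hdec.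
case: (List.in_split _ _ hin) => l1 [l2 efs].
have hf' := hf; case: hf' => hm _.
rewrite efs in hf hm.
have hf2 : factorization A n (map fst (l1 ++ f :: l2)) (l1 ++ f :: l2).
  by rewrite hm.
case: (decomp_L n0 hf2 hdec) => c [c1 cf cnf hL].
rewrite map_cat in hm.
case: l1 hm hL {hf hf2 efs} => [|p l1'] /= hm hL.
  case: hm => hf1 _.
  apply: (hbar0 c); first by move: hL; rewrite mul1n.
  - by move=> h; move: cnf; rewrite h hf1 eqxx.
  - by rewrite -hf1.
case: hm => hp hl.
apply: (BF hbf x0 (esym hl) c1 cf cnf).
by move: hL; rewrite kronl_size hp.
Qed.
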